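(* Let $p\in\mathbb N$ and let $P(p)$ be the set of partitions of $\{1,\ldots,p\}$. For $\pi\in P(p)$ and $x\in\mathbb C^n$ (indexed by $\mathbb Z/n\mathbb Z$) put $f_\pi(x)=\sum_{i\in\pi}x_{i_1}\cdots x_{i_p}$ and $g_\pi(x)=\sum_{i\vdash\pi}x_{i_1}\cdots x_{i_p}$, the sums being over multi-indices $i=(i_1,\ldots,i_p)\in(\mathbb Z/n\mathbb Z)^p$. Then the duality map $\Phi$ maps the set $$X_p=\{(x_{j-i})\in C^{circ}_n(\infty)\mid f_\pi(x),g_\pi(x)\in\mathbb R\ \text{for all }\pi\in P(p)\}$$ bijectively onto itself (here $x$ denotes the first row).
   Context: For a partition $\pi$ of $\{1,\ldots,p\}$ and a multi-index $i=(i_1,\ldots,i_p)$, write $i\in\pi$ if $a\sim_\pi b$ implies $i_a=i_b$, and write $i\vdash\pi$ if $\sum_{r\in\beta}i_r=0$ in $\mathbb Z/n\mathbb Z$ for every block $\beta$ of $\pi$. $C^{circ}_n(\infty)$ is the set of $n\times n$ circulant complex Hadamard matrices ($H_{ij}=x_{j-i}$, $|x_k|=1$, $H/\sqrt n$ unitary). $F=(w^{ij}/\sqrt n)_{i,j=0}^{n-1}$ with $w=e^{2\pi i/n}$, and $\Phi((x_{j-i})_{ij})=((Fx)_{j-i})_{ij}$, a bijection of $C^{circ}_n(\infty)$ onto itself. *)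

(* Defs.v *)
(* Complex numbers: an arbitrary numClosedFieldType C. *)
From HB Require Import structures.
From mathcomp Require Import all_boot all_order all_algebra.
Set Implicit Arguments. Unset Strict Implicit. Unset Printing Implicit Defensive.
Import Order.TTheory GRing.Theory Num.Theory.
Local Open Scope ring_scope.

Section Defs.
Variable C : numClosedFieldType.
Variable n : nat.
(* index type Z/NZ with N = n.+1 >= 1 *)
Local Notation N := n.+1.
Local Notation idx := 'I_N.

(* w = e^{2 pi i / N}: n.-root (-1) is e^{i pi / N} (minimal argument). *)
Definition omega : C := (N.-root (-1)) ^+ 2.

Definition circ (x : idx -> C) : 'M[C]_N := \matrix_(i, j) x (j - i).

Definition row0 (H : 'M[C]_N) : idx -> C := fun k => H ord0 k.

Definition unitary (U : 'M[C]_N) : Prop := U *m (map_mx Num.conj U)^T = 1%:M.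

Definition hadamard (H : 'M[C]_N) : Prop :=
  (forall i j, `|H i j| = 1) /\ unitary ((sqrtC (N%:R))^-1 *: H).

Definition fourier (x : idx -> C) : idx -> C :=
  fun k => (sqrtC (N%:R))^-1 * \sum_(j : idx) omega ^+ (k * j)%N * x j.

Definition Phi (H : 'M[C]_N) : 'M[C]_N := circ (fourier (row0 H)).

Definition circ_hadamard (H : 'M[C]_N) : Prop :=
  H = circ (row0 H) /\ hadamard H.

Variable p : nat.

Definition is_partition (pi : {set {set 'I_p}}) : bool :=
  partition pi [set: 'I_p].

Definition idx_in (pi : {set {set 'I_p}}) (i : {ffun 'I_p -> idx}) : bool :=
  [forall B in pi, forall a in B, forall b in B, i a == i b].

Definition idx_vdash (pi : {set {set 'I_p}}) (i : {ffun 'I_p -> idx}) : bool :=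
  [forall B in pi, (\sum_(r in B) i r == 0)%R].

Definition f_pi (pi : {set {set 'I_p}}) (x : idx -> C) : C :=
  \sum_(i : {ffun 'I_p -> idx} | idx_in pi i) \prod_(r < p) x (i r).

Definition g_pi (pi : {set {set 'I_p}}) (x : idx -> C) : C :=
  \sum_(i : {ffun 'I_p -> idx} | idx_vdash pi i) \prod_(r < p) x (i r).

Definition Xp (H : 'M[C]_N) : Prop :=
  circ_hadamard H /\
  forall pi, is_partition pi ->
    f_pi pi (row0 H) \is Num.real /\ g_pi pi (row0 H) \is Num.real.

End Defs.

(* Main.v *)
Require Import Defs.
From HB Require Import structures.
From mathcomp Require Import all_boot all_order all_algebra.
From mathcomp Require Import cyclic separable cyclotomic.
From mathcomp Require Import ring.
Set Implicit Arguments. Unset Strict Implicit. Unset Printing Implicit Defensive.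
Import Order.TTheory GRing.Theory Num.Theory.
Local Open Scope ring_scope.

Section Prim.
Variable C : numClosedFieldType.

Lemma prim_exists (M : nat) : (M > 0)%N -> exists z : C, M.-primitive_root z.
Proof.
pose p : {poly C} := 'X^M - 1; have [r Dp] := closed_field_poly_normal p.
move=> n_gt0; rewrite (monicP _) ?monicXnsubC // scale1r in Dp.
have rn1: all M.-unity_root r by apply/allP=> z; rewrite -root_prod_XsubC -Dp.
have sz_r: (M < (size r).+1)%N.
  by rewrite -(size_prod_XsubC r id) -Dp size_XnsubC.
have [|z] := hasP (has_prim_root n_gt0 rn1 _ sz_r); last by exists z.
by rewrite -separable_prod_XsubC -Dp separable_Xn_sub_1 // pnatr_eq0 -lt0n.
Qed.

Lemma list_max (s : seq C) (f : C -> C) (P : pred C) :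
  (forall x, f x \is Num.real) -> (exists2 x, x \in s & P x) ->
  exists x, [/\ x \in s, P x & forall y, y \in s -> P y -> f y <= f x].
Proof.
move=> Rf; elim: s => [[x]//|a s IH] [x xin Px].
case: (boolP (has P s)) => [/hasP[y yin Py]|hn].
  have [m [min Pm mmax]] := IH (ex_intro2 _ _ y yin Py).
  case: (boolP (P a)) => Pa.
    have [le|le] := real_leP (Rf a) (Rf m).
      exists m; split; first by rewrite inE min orbT.
        by [].
      move=> z; rewrite inE => /orP[/eqP->//|zin Pz]; exact: mmax.
    exists a; split; first by rewrite inE eqxx.
      by [].
    move=> z; rewrite inE => /orP[/eqP->//|zin Pz].
    exact: le_trans (mmax _ zin Pz) (ltW le).
  exists m; split; first by rewrite inE min orbT.
    by [].
  move=> z; rewrite inE => /orP[/eqP->|zin Pz]; first by rewrite (negbTE Pa).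
  exact: mmax.
have Pa : P a.
  move: xin; rewrite inE => /orP[/eqP<-//|xin].
  by move/hasPn: hn => /(_ _ xin); rewrite Px.
exists a; split; first by rewrite inE eqxx.
  by [].
move=> z; rewrite inE => /orP[/eqP->//|zin Pz].
by move/hasPn: hn => /(_ _ zin); rewrite Pz.
Qed.


Lemma unit_norm (x : C) k : (0 < k)%N -> x ^+ k = 1 -> `|x| = 1.
Proof.
move=> k0 h; have := congr1 Num.norm h; rewrite normrX normr1 => /eqP.
by rewrite pexpr_eq1 // => /eqP.
Qed.

Lemma conj_unit (x : C) : `|x| = 1 -> x^* = x^-1.
Proof. by move=> h; rewrite invC_norm h expr1n invr1 mul1r. Qed.

Lemma ReIm1 (x : C) : `|x| = 1 -> 'Re x ^+ 2 + 'Im x ^+ 2 = 1.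
Proof. by move=> h; rewrite -normC2_Re_Im h expr1n. Qed.

Lemma Re_le1 (x : C) : `|x| = 1 -> 'Re x <= 1.
Proof.
move=> h; have := leif_normC_Re_Creal x; rewrite h => /leifP.
move=> H; apply: le_trans (real_ler_norm (Creal_Re x)) _.
by case: ifP H => _ H; [rewrite (eqP H) | apply: ltW].
Qed.

Lemma ineq_contra (a b p q : C) : 0 <= b -> 0 <= q -> a < 1 ->
  a ^+ 2 + b ^+ 2 = 1 -> p ^+ 2 + q ^+ 2 = 1 -> p <= a ->
  p * a + q * b <= p -> False.
Proof.
move=> b0 q0 a1 hab hpq pa h.
have qb0 : 0 <= q * b by apply: mulr_ge0.
have h2 : q * b <= p * (1 - a) by rewrite mulrBr mulr1 lerBrDl.
have a1' : 0 < 1 - a by rewrite subr_gt0.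
have p0 : 0 <= p by rewrite -(pmulr_lge0 _ a1'); apply: le_trans h2.
have pa2 : p ^+ 2 <= a ^+ 2 by rewrite ler_pXn2r // ?nnegrE //; apply: le_trans pa.
have bq2 : b ^+ 2 <= q ^+ 2.
  have -> : b ^+ 2 = 1 - a ^+ 2 by rewrite -hab addrC addKr.
  have -> : q ^+ 2 = 1 - p ^+ 2 by rewrite -hpq addrC addKr.
  by rewrite lerD2l lerN2.
have bq : b <= q by rewrite -(ler_pXn2r (isT : (0 < 2)%N)) ?nnegrE.
have s4 : b * b <= q * b by rewrite ler_wpM2r.
have s5 : p * (1 - a) <= a * (1 - a) by rewrite ler_wpM2r // ltW.
have s6 : b * b = (1 - a) * (1 + a).
  by rewrite -expr2 mulrDr mulr1 mulrBl mul1r -expr2 addrA subrK -hab addrC addKr.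
have : (1 - a) * (1 + a) <= (1 - a) * a.
  rewrite -s6 [X in _ <= X]mulrC; apply: le_trans s4 (le_trans h2 s5).
by rewrite ler_pM2l // addrC gerDl ler10.
Qed.

Lemma gen_max (M : nat) (eta : C) : (0 < M)%N -> eta ^+ M = 1 -> eta != 1 ->
  0 <= 'Im eta ->
  (forall y, y ^+ M = 1 -> y != 1 -> 'Re y <= 'Re eta) ->
  forall y, y ^+ M = 1 -> exists k, y = eta ^+ k.
Proof.
move=> M0 eM e1 eIm emax.
have [z pz] := prim_exists M0.
pose s := [seq z ^+ (val i) | i <- enum 'I_M].
have ins x : x ^+ M = 1 -> x \in s.
  by move=> /(prim_rootP pz)[i ->]; apply/mapP; exists i; rewrite ?mem_enum.
pose inG x := [exists k : 'I_M, x == eta ^+ k].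
have inGP x : (exists k, x = eta ^+ k) -> inG x.
  case=> k ->; apply/existsP; exists (Ordinal (ltn_pmod k M0)).
  by rewrite /= (expr_mod _ eM).
have en : `|eta| = 1 := unit_norm M0 eM.
have e0 : eta != 0 by apply/negP => /eqP e0; move: en; rewrite e0 normr0 => /eqP; rewrite eq_sym oner_eq0.
have ec : eta^* = eta ^+ M.-1.
  rewrite conj_unit //; apply: (mulIf e0); rewrite mulVf // -exprSr prednK //.
move=> y yM; case: (boolP (inG y)) => [/existsP[k /eqP->]|yb]; first by exists (val k).
exfalso.
pose Bad := [pred x | (x ^+ M == 1) && ~~ inG x].
have By : Bad y by rewrite /= yM eqxx.
have [v [vin Bv vmax]] := list_max (f := fun x => 'Re x) (P := Bad) (fun x => Creal_Re x)
   (ex_intro2 _ _ y (ins _ yM) By).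
have vmax' x : Bad x -> 'Re x <= 'Re v.
  by move=> Bx; apply: vmax => //; apply: ins; move: Bx => /andP[/eqP].
have BadM x : Bad x -> Bad (x * eta^*).
  move=> /andP[/eqP xM xG]; apply/andP; split.
    by rewrite exprMn xM -rmorphXn eM rmorph1 mulr1.
  apply: contra xG => /existsP[k /eqP hk]; apply: inGP; exists k.+1.
  rewrite exprS mulrC -hk -mulrA conj_unit // mulVf // mulr1 //.
have BadC x : Bad x -> Bad x^*.
  move=> /andP[/eqP xM xG]; apply/andP; split.
    by rewrite -rmorphXn xM rmorph1.
  apply: contra xG => /existsP[k /eqP hk]; apply: inGP; exists (M.-1 * k)%N.
  by rewrite -[x]conjCK hk rmorphXn /= ec exprM.
have Bad1 x : Bad x -> x != 1.
  move=> /andP[_ xG]; apply: contra xG => /eqP->; apply: inGP; exists 0%N.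
  by rewrite expr0.
have BadN x : Bad x -> `|x| = 1 by move=> /andP[/eqP xM _]; apply: unit_norm M0 xM.
pose v' := if 0 <= 'Im v then v else v^*.
have Bv' : Bad v' by rewrite /v'; case: ifP => _ //; apply: BadC.
have vm' x : Bad x -> 'Re x <= 'Re v'.
  by move=> Bx; rewrite /v'; case: ifP => _; rewrite ?Re_conj; apply: vmax'.
have vIm : 0 <= 'Im v'.
  rewrite /v'; case: ifP => // /negbT; rewrite Im_conj oppr_ge0.
  by rewrite -real_ltNge ?rpred0 ?Creal_Im // => /ltW.
apply: (@ineq_contra ('Re eta) ('Im eta) ('Re v') ('Im v')) => //.
- rewrite lt_neqAle Re_le1 // andbT; apply: contra e1 => /eqP ea.
  apply/eqP; apply: eqC_semipolar; first by rewrite en normr1.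
    by rewrite ea (Creal_ReP _ (rpred1 _)).
  by rewrite (Creal_ImP _ (rpred1 _)) mulr0.
- exact: ReIm1.
- exact: ReIm1 (BadN _ Bv').
- apply: emax; last exact: Bad1.
  by move: Bv' => /andP[/eqP].
- have := vm' _ (BadM _ Bv'); rewrite ReM Re_conj Im_conj.
  by rewrite mulrN opprK.
Qed.

Lemma N1_neq1 : (-1 : C) != 1.
Proof.
apply/negP => /eqP h; have : (2%:R : C) == 0 by rewrite mulr2n -{1}h addNr.
by rewrite pnatr_eq0.
Qed.

Lemma omega_dvd (n : nat) m : (omega C n ^+ m == 1) = (n.+1 %| m)%N.
Proof.
rewrite /omega; case: n => [|n].
  by rewrite root1C sqrrN !expr1n eqxx dvd1n.
set N := n.+2; pose M := (N * 2)%N.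
have M0 : (0 < M)%N by [].
have [z pz] := prim_exists M0.
pose s := [seq z ^+ (val i) | i <- enum 'I_M].
have ins x : x ^+ M = 1 -> x \in s.
  by move=> /(prim_rootP pz)[i ->]; apply/mapP; exists i; rewrite ?mem_enum.
have N1M : (-1 : C) ^+ M = 1.
  rewrite /M mulnC exprM sqrrN !expr1n //.

pose P := [pred x : C | (x ^+ M == 1) && (x != 1)].
have Pm1 : P (-1) by rewrite /= N1M eqxx N1_neq1.
have [eta [_ /andP[/eqP eM e1] emax]] := list_max (f := fun x => 'Re x)
   (fun x => Creal_Re x) (ex_intro2 _ _ (-1) (ins _ N1M) Pm1).
pose eta' := if 0 <= 'Im eta then eta else eta^*.
have eM' : eta' ^+ M = 1 by rewrite /eta'; case: ifP => // _; rewrite -rmorphXn eM rmorph1.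
have e1' : eta' != 1.
  by rewrite /eta'; case: ifP => // _; apply: contra e1 => /eqP h; rewrite -[eta]conjCK h rmorph1.
have eIm : 0 <= 'Im eta'.
  rewrite /eta'; case: ifP => // /negbT; rewrite Im_conj oppr_ge0.
  by rewrite -real_ltNge ?rpred0 ?Creal_Im // => /ltW.
have emax' y : y ^+ M = 1 -> y != 1 -> 'Re y <= 'Re eta'.
  move=> yM y1; rewrite /eta'; case: ifP => _; rewrite ?Re_conj;
  (apply: emax; [exact: ins | by rewrite /P /= yM eqxx y1]).
have gen := gen_max M0 eM' e1' eIm emax'.
have edvd j : (eta' ^+ j == 1) = (M %| j)%N.
  apply/idP/idP => [/eqP ej|/dvdnP[c ->]]; last by rewrite mulnC exprM eM' expr1n.
  have [k zk] := gen z (prim_expr_order pz).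
  by rewrite (prim_order_dvd pz) zk -exprM mulnC exprM ej expr1n.
have eN : eta' ^+ N = -1.
  have : (eta' ^+ N) ^+ 2 == 1 by rewrite -exprM edvd.
  rewrite sqrf_eq1 edvd /M => /orP[|/eqP//].
  by move=> /(dvdn_leq (isT : (0 < N)%N)); rewrite -{2}(muln1 N) leq_pmul2l.
set zz := N.-root (-1).
have zN : zz ^+ N = -1 by rewrite rootCK.
have zIm : 0 <= 'Im zz by apply: Im_rootC_ge0.
have zM : zz ^+ M = 1 by rewrite exprM zN sqrrN expr1n.
have z1 : zz != 1 by apply: contra N1_neq1 => /eqP h; rewrite -zN h expr1n.
have r1 := rootC_Re_max (isT : (0 < N)%N) eN eIm.
have r2 := emax' _ zM z1.
have ez : zz = eta'.
  apply: eqC_semipolar.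
  - by rewrite (unit_norm M0 zM) (unit_norm M0 eM').
  - by apply/eqP; rewrite eq_le r1 r2.
  - by apply: mulr_ge0.
rewrite ez -exprM edvd /M mulnC dvdn_pmul2l //.
Qed.

End Prim.

Section Chi.
Variable C : numClosedFieldType.
Variable n : nat.
Local Notation N := n.+1.
Local Notation idx := 'I_N.
Local Notation om := (omega C n).

Lemma omN : om ^+ N = 1.
Proof. by apply/eqP; rewrite omega_dvd. Qed.

Lemma om_mod m1 m2 : m1 = m2 %[mod N] -> om ^+ m1 = om ^+ m2.
Proof. by move=> h; rewrite -(expr_mod m1 omN) h expr_mod // omN. Qed.

Definition chi (a b : idx) : C := om ^+ (a * b).

Lemma chiC a b : chi a b = chi b a.
Proof. by rewrite /chi mulnC. Qed.

Lemma chiDl a b c : chi (a + b) c = chi a c * chi b c.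
Proof. by rewrite /chi -exprD; apply: om_mod => /=; rewrite modnMml mulnDl. Qed.

Lemma chiDr a b c : chi c (a + b) = chi c a * chi c b.
Proof. by rewrite ![chi c _]chiC chiDl. Qed.

Lemma chi0l b : chi 0 b = 1.
Proof. by rewrite /chi mul0n expr0. Qed.

Lemma chi0r b : chi b 0 = 1.
Proof. by rewrite chiC chi0l. Qed.

Lemma chiNl a b : chi (- a) b * chi a b = 1.
Proof. by rewrite -chiDl addNr chi0l. Qed.

Lemma chiNr a b : chi a (- b) * chi a b = 1.
Proof. by rewrite ![chi a _]chiC chiNl. Qed.

Lemma chi_neq0 a b : chi a b != 0.
Proof. by apply/negP => /eqP h; move: (chiNl a b); rewrite h mulr0 => /eqP; rewrite eq_sym oner_eq0. Qed.

Lemma chiV a b : (chi a b)^-1 = chi (- a) b.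
Proof. by apply: (mulIf (chi_neq0 a b)); rewrite mulVf ?chi_neq0 // chiNl. Qed.

Lemma chiN a b : chi (- a) b = chi a (- b).
Proof. by rewrite -chiV; apply: (mulIf (chi_neq0 a b)); rewrite mulVf ?chi_neq0 // chiNr. Qed.

Lemma chi_norm a b : `|chi a b| = 1.
Proof.
by apply: (@unit_norm _ _ N) => //; rewrite /chi -exprM mulnC exprM omN expr1n.
Qed.

Lemma conj_chi a b : (chi a b)^* = chi (- a) b.
Proof. by rewrite conj_unit ?chi_norm // chiV. Qed.

Lemma chi_sum a : \sum_(t : idx) chi t a = N%:R * (a == 0)%:R.
Proof.
case: eqP => [->|/eqP a0].
  by rewrite mulr1 (eq_bigr (fun _ => 1)) ?sumr_const ?card_ord // => t _; rewrite chi0r.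
rewrite mulr0; set r := om ^+ a.
have hr : r ^+ N = 1 by rewrite /r -exprM mulnC exprM omN expr1n.
have r1 : r != 1.
  rewrite /r omega_dvd; apply: contra a0 => ha.
  case: (posnP a) => [a00|a_pos]; first by apply/eqP; apply: val_inj.
  by move: (dvdn_leq a_pos ha); rewrite leqNgt ltn_ord.
have := subrX1 r N; rewrite hr subrr => /esym/eqP; rewrite mulf_eq0 subr_eq0 (negbTE r1) /=.
move=> /eqP h; apply: etrans h; apply: eq_bigr => t _; by rewrite /chi /r -[om ^+ a ^+ t]exprM mulnC.
Qed.

Lemma sum_delta (F : idx -> C) c : \sum_l F l * (l == c)%:R = F c.
Proof.
rewrite (bigD1 c) //= eqxx mulr1 big1 ?addr0 // => l /negbTE->; by rewrite mulr0.
Qed.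

Definition s : C := (sqrtC (N%:R : C))^-1.

Lemma s_ge0 : 0 <= s.
Proof. by rewrite invr_ge0 sqrtC_ge0 ler0n. Qed.

Lemma s_real : s \is Num.real.
Proof. exact: ger0_real s_ge0. Qed.

Lemma s_conj : s^* = s.
Proof. exact: geC0_conj s_ge0. Qed.

Lemma N_neq0 : (N%:R : C) != 0.
Proof. by rewrite pnatr_eq0. Qed.

Lemma s2N : s * s * N%:R = 1.
Proof. by rewrite /s -expr2 exprVn sqrtCK mulVf // N_neq0. Qed.

Lemma fourierE (x : idx -> C) k : fourier x k = s * \sum_j chi k j * x j.
Proof. by []. Qed.

Lemma FF (x : idx -> C) k : fourier (fourier x) k = x (- k).
Proof.
rewrite fourierE.
transitivity (s * s * \sum_l x l * \sum_j chi j (k + l)).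
  rewrite -mulrA; congr (_ * _).
  transitivity (\sum_j \sum_l s * (chi k j * chi j l * x l)).
    apply: eq_bigr => j _; rewrite fourierE !big_distrr /=.
    by apply: eq_bigr => l _; ring.
  rewrite exchange_big big_distrr /=; apply: eq_bigr => l _.
  rewrite big_distrr big_distrr /=; apply: eq_bigr => j _.
  rewrite chiDr [chi j k]chiC; ring.
under eq_bigr do rewrite chi_sum addrC addr_eq0.
rewrite (eq_bigr (fun l => N%:R * (x l * (l == - k)%:R))); last by move=> l _; ring.
by rewrite -big_distrr /= sum_delta mulrA s2N mul1r.
Qed.

Lemma unit_entry (x : idx -> C) i j :
  (s *: circ x *m (map_mx Num.conj (s *: circ x))^T) i j =
  s * s * \sum_l x (l - i) * (x (l - j))^*.
Proof.
rewrite mxE big_distrr /=; apply: eq_bigr => l _.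
rewrite !mxE rmorphM /= s_conj; ring.
Qed.

Lemma unitary_circE (x : idx -> C) : unitary (s *: circ x) <->
  forall i j, s * s * \sum_l x (l - i) * (x (l - j))^* = (i == j)%:R.
Proof.
split=> [h i j | h].
  by rewrite -unit_entry h mxE.
by apply/matrixP => i j; rewrite unit_entry h mxE.
Qed.

Lemma row0_circ (y : idx -> C) k : Defs.row0 (circ y) k = y k.
Proof. by rewrite /Defs.row0 /circ mxE subr0. Qed.

Lemma conj_fourier (x : idx -> C) k :
  (fourier x k)^* = s * \sum_l chi (- k) l * (x l)^*.
Proof.
rewrite fourierE rmorphM /= s_conj rmorph_sum /=; congr (_ * _).
by apply: eq_bigr => l _; rewrite rmorphM /= conj_chi.
Qed.

Lemma norm_fourier (x : idx -> C) : unitary (s *: circ x) ->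
  forall k, `|fourier x k| = 1.
Proof.
move=> /unitary_circE hu k.
suff h : fourier x k * (fourier x k)^* = 1.
  by apply/eqP; rewrite -(pexpr_eq1 (isT : (0 < 2)%N)) ?normr_ge0 // normCK h.
rewrite conj_fourier {1}fourierE.
transitivity (s * s * \sum_l \sum_j chi k j * chi (- k) l * x j * (x l)^*).
  rewrite mulrACA; congr (_ * _); rewrite big_distrl exchange_big /=.
  apply: eq_bigr => l _; rewrite big_distrr /=; apply: eq_bigr => j _ /=; ring.
transitivity (s * s * \sum_l \sum_d chi k d * x (d + l) * (x l)^*).
  congr (_ * _); apply: eq_bigr => l _.
  rewrite (reindex_inj (addIr l)) /=; apply: eq_bigr => d _; rewrite chiDr.
  have := chiNl k l; rewrite mulrC => hk.
  transitivity (chi k d * x (d + l) * (x l)^* * (chi k l * chi (- k) l)); first by ring.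
  by rewrite hk mulr1.
rewrite exchange_big big_distrr /=.
transitivity (\sum_d chi k d * (d == 0)%:R); last by rewrite sum_delta chi0r.
apply: eq_bigr => d _.
have := hu (- d) 0; rewrite oppr_eq0 => <-.
rewrite [RHS]mulrCA [in RHS]big_distrr /=; congr (_ * _); apply: eq_bigr => l _.
rewrite opprK subr0 addrC; ring.
Qed.


Lemma parseval (u v : idx -> C) :
  \sum_l fourier u l * (fourier v l)^* = \sum_a u a * (v a)^*.
Proof.
transitivity (s * s * \sum_a \sum_b \sum_l chi l a * chi (- l) b * u a * (v b)^*).
  symmetry.
  rewrite (eq_bigr (fun a => \sum_l \sum_b chi l a * chi (- l) b * u a * (v b)^*));
    last by move=> a _; rewrite exchange_big.
  rewrite exchange_big big_distrr /=; apply: eq_bigr => l _.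
  rewrite conj_fourier fourierE [RHS]mulrACA; congr (_ * _).
  rewrite big_distrl /=; apply: eq_bigr => a _.
  rewrite big_distrr /=; apply: eq_bigr => b _; ring.
transitivity (s * s * \sum_a \sum_b u a * (v b)^* * N%:R * (b == a)%:R).
  congr (_ * _); apply: eq_bigr => a _; apply: eq_bigr => b _.
  transitivity (u a * (v b)^* * \sum_l chi l (a - b)).
    rewrite big_distrr /=; apply: eq_bigr => l _; rewrite chiN chiDr; ring.
  by rewrite chi_sum subr_eq0 eq_sym mulrA.
rewrite big_distrr /=; apply: eq_bigr => a _.
rewrite (eq_bigr (fun b => (N%:R * u a) * (v b)^* * (b == a)%:R)) ?sum_delta;
  last by move=> b _; ring.
transitivity (s * s * N%:R * (u a * (v a)^*)); first by ring.
by rewrite s2N mul1r.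
Qed.

Lemma unitary_fourier (x : idx -> C) : (forall a, `|x a| = 1) ->
  unitary (s *: circ (fourier x)).
Proof.
move=> hx; apply/unitary_circE => i j.
have sh c l : fourier x (l - c) = fourier (fun a => chi (- c) a * x a) l.
  rewrite !fourierE; congr (_ * _); apply: eq_bigr => a _; rewrite chiDl; ring.
rewrite (eq_bigr (fun l => fourier (fun a => chi (- i) a * x a) l *
   (fourier (fun a => chi (- j) a * x a) l)^*)); last by move=> l _; rewrite !sh.
rewrite parseval.
rewrite (eq_bigr (fun a => chi a (j - i))); last first.
  move=> a _; rewrite rmorphM /= conj_chi opprK.
  have : x a * (x a)^* = 1 by rewrite -normCK hx expr1n.
  move=> h1; transitivity (chi (- i) a * chi j a * (x a * (x a)^*)); first by ring.
  by rewrite h1 mulr1 mulrC -chiDl chiC.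
by rewrite chi_sum subr_eq0 [j == i]eq_sym mulrA s2N mul1r.
Qed.

End Chi.

Section Part.
Variable C : numClosedFieldType.
Variables n p : nat.
Local Notation N := n.+1.
Local Notation idx := 'I_N.
Local Notation om := (omega C n).
Local Notation chi := (@chi C n).

Definition Chi (k j : {ffun 'I_p -> idx}) : C := \prod_(r < p) chi (k r) (j r).

Lemma Chi_exp k j : Chi k j = om ^+ (\sum_(r < p) (k r * j r))%N.
Proof. by rewrite /Chi prodrXr. Qed.

Lemma val_sum (B : {set 'I_p}) (j : {ffun 'I_p -> idx}) :
  val (\sum_(r in B) j r : idx) = ((\sum_(r in B) (j r : nat)) %% N)%N.
Proof.
apply: (big_rec2 (fun (y1 : idx) (y2 : nat) => val y1 = (y2 %% N)%N)).
  by rewrite mod0n.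
by move=> r a b _ ih /=; rewrite ih modnDmr.
Qed.

Lemma in_block (pi : {set {set 'I_p}}) (k : {ffun 'I_p -> idx}) B a b :
  idx_in pi k -> B \in pi -> a \in B -> b \in B -> k a = k b.
Proof.
by move=> /forallP /(_ B) /implyP h Bp aB bB; move: (h Bp) => /forall_inP /(_ a aB) /forall_inP /(_ b bB) /eqP.
Qed.

Lemma in_closed (pi : {set {set 'I_p}}) (f : idx -> idx -> idx) (k1 k2 : {ffun 'I_p -> idx}) :
  idx_in pi k1 -> idx_in pi k2 -> idx_in pi [ffun r => f (k1 r) (k2 r)].
Proof.
move=> h1 h2; apply/forall_inP => B Bp; apply/forall_inP => a aB; apply/forall_inP => b bB.
by rewrite !ffunE (in_block h1 Bp aB bB) (in_block h2 Bp aB bB).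
Qed.

Lemma idx_in0 (pi : {set {set 'I_p}}) : idx_in pi [ffun _ => (0 : idx)].
Proof. by apply/forall_inP => B _; apply/forall_inP => a _; apply/forall_inP => b _; rewrite !ffunE. Qed.

Definition cardG (pi : {set {set 'I_p}}) := #|[pred k : {ffun 'I_p -> idx} | idx_in pi k]|.

Lemma cardG_neq0 (pi : {set {set 'I_p}}) : (cardG pi)%:R != 0 :> C.
Proof.
rewrite pnatr_eq0 -lt0n; apply/card_gt0P; exists [ffun _ => (0 : idx)].
by rewrite inE idx_in0.
Qed.

Lemma K_lemma (pi : {set {set 'I_p}}) (j : {ffun 'I_p -> idx}) : is_partition pi ->
  \sum_(k | idx_in pi k) Chi k j = (cardG pi)%:R * (idx_vdash pi j)%:R.
Proof.
move=> /and3P[/eqP cov triv _].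
case: (boolP (idx_vdash pi j)) => hv.
  rewrite mulr1 /cardG -sumr_const; apply: eq_big => // k hk.
  rewrite Chi_exp; apply/eqP; rewrite omega_dvd.
  have -> : (\sum_(r < p) (k r * j r) = \sum_(r in cover pi) (k r * j r))%N.
    by apply: eq_bigl => r; rewrite cov inE.
  rewrite big_trivIset //; apply: dvdn_sum => B Bp.
  case: (set_0Vmem B) => [->|[r0 r0B]]; first by rewrite big_set0.
  rewrite (eq_bigr (fun r => k r0 * j r)%N); last first.
    by move=> r rB; rewrite (in_block hk Bp rB r0B).
  rewrite -big_distrr /=; apply: dvdn_mull.
  move/forall_inP: hv => /(_ B Bp) /eqP hB.
  by rewrite /dvdn -val_sum hB.
rewrite mulr0.
have [B Bp hB] : exists2 B, B \in pi & (\sum_(r in B) j r != 0 :> idx).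
  by move/forallPn: hv => [B]; rewrite negb_imply => /andP[Bp hB]; exists B.
pose k0 : {ffun 'I_p -> idx} := [ffun r => if r \in B then Zp1 else 0].
have k0G : idx_in pi k0.
  apply/forall_inP => B' B'p; apply/forall_inP => a aB'; apply/forall_inP => b bB'.
  rewrite !ffunE.
  have e : (a \in B) = (b \in B).
    apply/idP/idP => h.
      have -> : B = B' by rewrite -(def_pblock triv Bp h) (def_pblock triv B'p aB').
      done.
    have -> : B = B' by rewrite -(def_pblock triv Bp h) (def_pblock triv B'p bB').
    done.
  by rewrite e.
have c1 : Chi k0 j != 1.
  rewrite Chi_exp omega_dvd.
  have -> : (\sum_(r < p) k0 r * j r = (1 %% N) * \sum_(r in B) j r)%N.
    rewrite big_distrr /= [RHS]big_mkcond /=; apply: eq_bigr => r _; rewrite ffunE.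
    by case: ifP.
  rewrite /dvdn modnMml mul1n -val_sum.
  by apply: contra hB => /eqP h; apply/eqP; apply: val_inj.
pose h (k : {ffun 'I_p -> idx}) := [ffun r => k r + k0 r].
have hinj : injective h.
  move=> k1 k2 /ffunP e; apply/ffunP => r; move: (e r); rewrite !ffunE; exact: addIr.
have hG k : idx_in pi (h k) = idx_in pi k.
  apply/idP/idP => hk.
    have -> : k = [ffun r => h k r - k0 r] by apply/ffunP => r; rewrite !ffunE addrK.
    exact: (in_closed (fun a b => a - b) hk k0G).
  exact: (in_closed (fun a b => a + b) hk k0G).
have hChi k : Chi (h k) j = Chi k j * Chi k0 j.
  by rewrite /Chi -big_split /=; apply: eq_bigr => r _; rewrite ffunE chiDl.
set S := \sum_(k | _) _.
have : S = S * Chi k0 j.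
  rewrite {1}/S (reindex_inj hinj) /= (eq_bigl _ _ hG) /S big_distrl /=.
  by apply: eq_bigr => k _; exact: hChi.
move/eqP; rewrite -subr_eq0 -{1}(mulr1 S) -mulrBr mulf_eq0 subr_eq0 [1 == _]eq_sym (negbTE c1) orbF.
by move/eqP.
Qed.

Local Notation s := (@s C n).

Lemma prod_const_ord (c : C) : \prod_(r < p) c = c ^+ p.
Proof. by rewrite prodr_const card_ord. Qed.

Lemma prod_fourier (x : idx -> C) (i : {ffun 'I_p -> idx}) :
  \prod_(r < p) fourier x (i r) =
  s ^+ p * \sum_(j : {ffun 'I_p -> idx}) \prod_(r < p) (chi (i r) (j r) * x (j r)).
Proof.
rewrite (eq_bigr (fun r => s * \sum_t chi (i r) t * x t)) //.
by rewrite big_split /= prod_const_ord bigA_distr_bigA.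
Qed.

Lemma f_fourier (pi : {set {set 'I_p}}) (x : idx -> C) : is_partition pi ->
  f_pi pi (fourier x) = s ^+ p * (cardG pi)%:R * g_pi pi x.
Proof.
move=> hp; rewrite /f_pi /g_pi.
under eq_bigr do rewrite prod_fourier.
rewrite -big_distrr -mulrA /=; congr (_ * _).
transitivity (\sum_(j : {ffun 'I_p -> idx}) (\prod_(r < p) x (j r)) *
   \sum_(i | idx_in pi i) Chi i j).
  rewrite exchange_big /=; apply: eq_bigr => j _; rewrite big_distrr /=.
  by apply: eq_bigr => i _; rewrite big_split /= mulrC.
rewrite (eq_bigr (fun j : {ffun 'I_p -> idx} => (\prod_(r < p) x (j r)) * ((cardG pi)%:R * (idx_vdash pi j)%:R)));
  last by move=> j _; rewrite K_lemma.
rewrite big_distrr /= [RHS]big_mkcond /=; apply: eq_bigr => j _.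
by case: (idx_vdash pi j); rewrite ?mulr0 ?mulr1 // mulrC.
Qed.

Lemma s_neq0 : s != 0.
Proof. by rewrite invr_eq0 sqrtC_eq0 N_neq0. Qed.

Lemma sum_chi_fourier (x : idx -> C) c : \sum_u chi c u * fourier x u = s^-1 * x (- c).
Proof. by have := FF x c; rewrite fourierE => <-; rewrite mulrA mulVf ?s_neq0 ?mul1r. Qed.

Lemma neg_sum (pi : {set {set 'I_p}}) (x : idx -> C) :
  \sum_(k | idx_in pi k) \prod_(r < p) x (- k r) = \sum_(k | idx_in pi k) \prod_(r < p) x (k r).
Proof.
pose h : {ffun 'I_p -> idx} -> {ffun 'I_p -> idx} := fun k => [ffun r => - k r].
have hK : involutive h by move=> k; apply/ffunP => r; rewrite !ffunE opprK.
have hG k : idx_in pi (h k) = idx_in pi k.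
  apply/idP/idP => hk; last exact: (in_closed (fun a _ => - a) hk hk).
  by rewrite -[k]hK; exact: (in_closed (fun a _ => - a) hk hk).
rewrite (reindex_inj (inv_inj hK)) /= (eq_bigl _ _ hG).
by apply: eq_bigr => k _; apply: eq_bigr => r _; rewrite ?hK !ffunE ?opprK.
Qed.

Lemma g_fourier (pi : {set {set 'I_p}}) (x : idx -> C) : is_partition pi ->
  g_pi pi (fourier x) = ((cardG pi)%:R)^-1 * s^-1 ^+ p * f_pi pi x.
Proof.
move=> hp; rewrite /g_pi /f_pi big_mkcond /=.
transitivity (\sum_i ((cardG pi)%:R)^-1 * (\sum_(k | idx_in pi k) Chi k i) *
   \prod_(r < p) fourier x (i r)).
  apply: eq_bigr => i _; rewrite K_lemma // mulrA mulVf ?cardG_neq0 // mul1r.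
  by case: idx_vdash; rewrite ?mul1r ?mul0r.
transitivity (((cardG pi)%:R)^-1 * \sum_(k | idx_in pi k)
   \sum_i Chi k i * \prod_(r < p) fourier x (i r)).
  transitivity (\sum_i \sum_(k | idx_in pi k) ((cardG pi)%:R)^-1 *
     (Chi k i * \prod_(r < p) fourier x (i r))).
    by apply: eq_bigr => i _; rewrite -mulrA big_distrl big_distrr.
  rewrite exchange_big big_distrr /=; apply: eq_bigr => k _; by rewrite big_distrr.
rewrite -mulrA -neg_sum; congr (_ * _).
rewrite big_distrr /=; apply: eq_bigr => k _.
transitivity (\prod_(r < p) \sum_u chi (k r) u * fourier x u).
  by rewrite bigA_distr_bigA /=; apply: eq_bigr => i _; rewrite /Chi -big_split.
rewrite (eq_bigr (fun r => s^-1 * x (- k r))); last by move=> r _; rewrite sum_chi_fourier.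
by rewrite big_split /= prod_const_ord.
Qed.

End Part.

Section Main.
Variable C : numClosedFieldType.
Variable n : nat.
Local Notation N := n.+1.
Local Notation idx := 'I_N.
Local Notation s := (@s C n).

Lemma fourier_ext (x y : idx -> C) : (forall k, x k = y k) -> forall k, fourier x k = fourier y k.
Proof. by move=> h k; rewrite !fourierE; congr (_ * _); apply: eq_bigr => j _; rewrite h. Qed.

Lemma f_ext p (pi : {set {set 'I_p}}) (x y : idx -> C) : (forall k, x k = y k) -> f_pi pi x = f_pi pi y.
Proof. by move=> h; apply: eq_bigr => i _; apply: eq_bigr => r _; rewrite h. Qed.

Lemma g_ext p (pi : {set {set 'I_p}}) (x y : idx -> C) : (forall k, x k = y k) -> g_pi pi x = g_pi pi y.
Proof. by move=> h; apply: eq_bigr => i _; apply: eq_bigr => r _; rewrite h. Qed.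

Lemma row0_Phi (H : 'M[C]_N) k : Defs.row0 (Phi H) k = fourier (Defs.row0 H) k.
Proof. by rewrite /Phi row0_circ. Qed.

Lemma circ_ext (x y : idx -> C) : (forall k, x k = y k) -> circ x = circ y.
Proof. by move=> h; apply/matrixP => i j; rewrite !mxE h. Qed.

Lemma Phi_circ (H : 'M[C]_N) : Phi H = circ (Defs.row0 (Phi H)).
Proof. by rewrite /Phi; apply: circ_ext => k; rewrite row0_circ. Qed.

Lemma Xp_Phi p (H : 'M[C]_N) : Xp p H -> Xp p (Phi H).
Proof.
move=> [[Hc [Hn Hu]] Hr]; set x := Defs.row0 H.
have Hu' : unitary (s *: circ x) by rewrite -Hc.
have xn a : `|x a| = 1 by apply: Hn.
split; first split.
- exact: Phi_circ.
- split.
    by move=> i j; rewrite /Phi mxE; apply: norm_fourier.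
  exact: unitary_fourier.
- move=> pi hp; have [fr gr] := Hr pi hp.
  rewrite (@f_ext p pi _ _ (row0_Phi H)) (@g_ext p pi _ _ (row0_Phi H)).
  rewrite f_fourier // g_fourier //; split.
    by rewrite rpredM // ?rpredM ?rpredX ?s_real ?realn.
  by apply: rpredM => //; apply: rpredM; [rewrite rpredV; apply: realn | apply: rpredX; rewrite rpredV; apply: s_real].
Qed.

Lemma row0_PhiPhi (H : 'M[C]_N) k : Defs.row0 (Phi (Phi H)) k = Defs.row0 H (- k).
Proof. by rewrite row0_Phi (fourier_ext (row0_Phi H)) FF. Qed.

End Main.

Theorem proposition3p4 (C : numClosedFieldType) (n p : nat) :
  (forall H : 'M[C]_n.+1, Xp p H -> Xp p (Phi H)) /\
  (forall H1 H2 : 'M[C]_n.+1, Xp p H1 -> Xp p H2 -> Phi H1 = Phi H2 -> H1 = H2) /\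
  (forall H2 : 'M[C]_n.+1, Xp p H2 -> exists2 H1, Xp p H1 & Phi H1 = H2).
Proof.
split; first exact: Xp_Phi.
split.
  move=> H1 H2 [[H1c _] _] [[H2c _] _] e.
  rewrite H1c H2c; apply: circ_ext => k.
  rewrite -[k]opprK -!row0_PhiPhi.
  by rewrite !row0_Phi; apply: fourier_ext => j; rewrite e.
move=> H2 X2; exists (Phi (Phi (Phi H2))); first by do 3 apply: Xp_Phi.
case: X2 => [[H2c _] _].
rewrite Phi_circ [RHS]H2c; apply: circ_ext => k.
by rewrite -/(Phi (Phi (Phi (Phi H2)))) row0_PhiPhi row0_PhiPhi opprK.
Qed.
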